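(* Let $\sigma_0,\sigma_\epsilon>0$, $\theta_0,b\in\mathbb{R}$. Let the prior belief be $\Theta\sim\mathrm{Cauchy}(\theta_0,\sigma_0)$ and let the signal be $X=\Theta+b+\epsilon$ with $\epsilon\sim\mathrm{Cauchy}(0,\sigma_\epsilon)$ independent of $\Theta$. Then for every $x\in\mathbb{R}$ the posterior mean $\theta_1=\mathbb{E}[\Theta\mid X=x]$ exists and satisfies $$\theta_1-\theta_0=\omega\,(x-b-\theta_0),\qquad \omega=\frac{\sigma_0}{\sigma_0+\sigma_\epsilon}.$$
   Context: $\mathrm{Cauchy}(\mu,s)$ denotes the distribution with density $t\mapsto\dfrac{1}{\pi s\,[1+((t-\mu)/s)^2]}$. The posterior mean is $\theta_1=\dfrac{\int\theta\,f_\Theta(\theta)\,l_\epsilon(x-b-\theta)\,d\theta}{\int f_\Theta(\theta)\,l_\epsilon(x-b-\theta)\,d\theta}$, with $f_\Theta$ the prior density and $l_\epsilon$ the noise density. *)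

(* Defs.v *)
From HB Require Import structures.
From mathcomp Require Import all_boot all_order all_algebra.
From mathcomp Require Import all_classical all_reals all_analysis.
Set Implicit Arguments. Unset Strict Implicit. Unset Printing Implicit Defensive.
Import Order.TTheory GRing.Theory Num.Theory.
Local Open Scope ring_scope.
Local Open Scope classical_set_scope.

Definition cauchy_pdf {R : realType} (mu s : R) (t : R) : R :=
  1 / (pi * s * (1 + ((t - mu) / s) ^+ 2)).

Definition post_weight {R : realType} (fTheta leps : R -> R) (x b : R) (th : R) : R :=
  fTheta th * leps (x - b - th).

Definition posterior_mean {R : realType} (fTheta leps : R -> R) (x b : R) : R :=
  Rintegral (@lebesgue_measure R) setT (fun th => th * post_weight fTheta leps x b th)
  / Rintegral (@lebesgue_measure R) setT (post_weight fTheta leps x b).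

(* Main.v *)
Require Import Defs.
From HB Require Import structures.
From mathcomp Require Import all_boot all_order all_algebra.
From mathcomp Require Import all_classical all_reals all_analysis.
From mathcomp Require Import measurable_realfun.
From mathcomp Require Import ring lra.
Set Implicit Arguments. Unset Strict Implicit. Unset Printing Implicit Defensive.
Import Order.TTheory GRing.Theory Num.Theory.
Import numFieldNormedType.Exports.
Local Open Scope ring_scope.
Local Open Scope classical_set_scope.

Section S0.
Context {R : realType}.
Notation mu := (@lebesgue_measure R).

Lemma FTC_R (f F : R -> R) (l1 l2 : R) :
  (forall x, 0 <= f x) -> continuous f -> (forall x : R, is_derive x (1:R) F (f x)) ->
  F x @[x --> +oo] --> l1 -> F x @[x --> -oo] --> l2 ->
  (\int[mu]_(x in setT) (f x)%:E = (l1 - l2)%:E)%E.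
Proof.
move=> f0 cf dF Fl1 Fl2.
have mf : measurable_fun [set: R] f by exact: continuous_measurable_fun.
have mposnums : measurable [set x : R | 0 <= x]%R by rewrite -set_itvcy.
have cF : continuous F.
  by move=> x; apply/differentiable_continuous/derivable1_diffP; case: (dF x).
rewrite -(setUv [set x : R | 0 <= x]%R) ge0_integral_setU//= ; last 4 first.
  exact: measurableC.
  by apply/measurable_EFinP; rewrite setUv.
  by move=> x _; rewrite lee_fin.
  exact/disj_setPCl.
rewrite -set_itvcy// setCitvr.
rewrite integral_itv_bndo_bndc; last exact/measurable_EFinP/measurable_funTS.
rewrite -{2}oppr0 ge0_integration_by_substitutionNy//; last first.
  exact: continuous_subspaceT.
rewrite (@ge0_continuous_FTC2y R f F 0 l1) //; last 3 first.
- exact: continuous_subspaceT.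
- exact/cvg_at_right_filter/cF.
- by move=> x _; rewrite derive1E; case: (dF x) => _ ->.
rewrite (@ge0_continuous_FTC2y R (f \o -%R) (fun x => - F (- x)) 0 (- l2)) //; last 5 first.
- by move=> x _; rewrite /comp.
- apply: continuous_subspaceT => x.
  apply: (@continuous_comp _ _ _ -%R f); [exact: continuousN|exact: cf].
- have := Fl2; rewrite cvgNy_compNP => h; exact: cvgN h.
- apply/cvg_at_right_filter; apply: continuousN.
  apply: (@continuous_comp _ _ _ -%R F); [exact: continuousN|exact: cF].
- move=> x _; rewrite derive1E.
  have := @is_derive1_comp R F (-%R) x (f (- x)) (-1) (dF _) (is_deriveNid _ _).
  move=> /is_deriveN; case => _ ->.
  by rewrite /= mulrN1 opprK.
by rewrite oppr0 -!EFinD; congr EFin; ring.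
Qed.

Lemma FTC_R_int (f F : R -> R) (l1 l2 : R) :
  (forall x, 0 <= f x) -> continuous f -> (forall x : R, is_derive x (1:R) F (f x)) ->
  F x @[x --> +oo] --> l1 -> F x @[x --> -oo] --> l2 ->
  mu.-integrable setT (EFin \o f) /\ Rintegral mu setT f = l1 - l2.
Proof.
move=> f0 cf dF Fl1 Fl2.
have I := FTC_R f0 cf dF Fl1 Fl2.
split; last by rewrite /Rintegral I.
apply/integrableP; split.
  by apply/measurable_EFinP; exact: continuous_measurable_fun.
have -> : (\int[mu]_x `|(EFin \o f) x| = \int[mu]_x (f x)%:E)%E.
  by apply: eq_integral => x _ /=; rewrite ger0_norm.
by rewrite I ltry.
Qed.

Lemma FTC_R_signed (f F h H : R -> R) (l1 l2 m1 m2 : R) :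
  (forall x, `|f x| <= h x) -> continuous f -> continuous h ->
  (forall x : R, is_derive x (1:R) F (f x)) ->
  (forall x : R, is_derive x (1:R) H (h x)) ->
  F x @[x --> +oo] --> l1 -> F x @[x --> -oo] --> l2 ->
  H x @[x --> +oo] --> m1 -> H x @[x --> -oo] --> m2 ->
  mu.-integrable setT (EFin \o f) /\ Rintegral mu setT f = l1 - l2.
Proof.
move=> fh cf ch dF dH Fl1 Fl2 Hm1 Hm2.
have h0 x : 0 <= h x by apply: le_trans (fh x).
have fh0 x : 0 <= f x + h x.
  by have := fh x; rewrite ler_norml => /andP[+ _]; rewrite -subr_ge0 opprK addrC.
have [ih Ih] := FTC_R_int h0 ch dH Hm1 Hm2.
have [ifh Ifh] := @FTC_R_int (f \+ h) (F \+ H) (l1 + m1) (l2 + m2) fh0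
  (fun x => continuousD (cf x) (ch x)) (fun x => is_deriveD (dF x) (dH x))
  (cvgD Fl1 Hm1) (cvgD Fl2 Hm2).
have i : mu.-integrable setT (EFin \o f).
  have := integrableB measurableT ifh ih.
  apply: eq_integrable => // x _ /=; rewrite -EFinB; congr EFin; ring.
split => //.
have -> : Rintegral mu setT f = Rintegral mu setT ((f \+ h) \- h).
  by apply: eq_Rintegral => x _ /=; ring.
rewrite RintegralB // Ifh Ih; ring.
Qed.
End S0.


Section S1.
Context {R : realType}.
Definition Pq (s c t : R) := s^+2 + (t - c)^+2.

Lemma Pq_gt0 (s c t : R) : 0 < s -> 0 < Pq s c t.
Proof. by move=> s0; rewrite /Pq ltr_pwDl ?sqr_ge0 ?exprn_gt0. Qed.

Lemma is_derive_Pq s c (x : R) : is_derive x (1:R) (Pq s c) (2 * (x - c)).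
Proof.
rewrite /Pq; apply: is_derive_eq.
rewrite -![_ *: _]/(_ * _); ring.
Qed.

Lemma is_derive_lnPq s c (x : R) : 0 < s ->
  is_derive x (1:R) (fun t => ln (Pq s c t)) (2 * (x - c) / Pq s c x).
Proof.
move=> s0.
have := @is_derive1_comp R (@ln R) (Pq s c) x _ _ (is_derive1_ln (Pq_gt0 c x s0)) (is_derive_Pq s c x).
by rewrite mulrC.
Qed.

Lemma is_derive_atan s c (x : R) : 0 < s ->
  is_derive x (1:R) (fun t => atan ((t - c) / s)) (s / Pq s c x).
Proof.
move=> s0.
have h : is_derive x (1:R) (fun t => (t - c) / s) (s^-1).
  apply: is_derive_eq. rewrite -![_ *: _]/(_ * _); ring.
have := @is_derive1_comp R (@atan R) (fun t => (t - c) / s) x _ _ (is_derive1_atan _) h.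
move=> H; apply: is_derive_eq.
have sn : s != 0 by rewrite gt_eqF.
have Pn : Pq s c x != 0 by rewrite gt_eqF // Pq_gt0.
move: Pn; rewrite /Pq => Pn.
by field; rewrite Pn sn.
Qed.

Definition ratf (a e c y al be t : R) := (al * t + be) / (Pq a c t * Pq e y t).

Definition Gf (a e c y t : R) := (e - a)/2 * (ln (Pq a c t) - ln (Pq e y t))
  - (y - c) * atan ((t - c)/a) + (y - c) * atan ((t - y)/e).

Definition Nn (a e c y : R) := (y - c)^+2 + (a - e)^+2.
Definition alL (a e : R) := a + e.
Definition beL (a e c y : R) := - (a + e) * c - a * (y - c).

Lemma is_derive_G a e c y (x : R) : 0 < a -> 0 < e ->
  is_derive x (1:R) (Gf a e c y)
    (ratf a e c y (Nn a e c y * alL a e) (Nn a e c y * beL a e c y) x).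
Proof.
move=> a0 e0.
have h1 := is_derive_lnPq c x a0.
have h2 := is_derive_lnPq y x e0.
have h3 := is_derive_atan c x a0.
have h4 := is_derive_atan y x e0.
rewrite /Gf; apply: is_derive_eq.
have P1 : Pq a c x != 0 by rewrite gt_eqF // Pq_gt0.
have P2 : Pq e y x != 0 by rewrite gt_eqF // Pq_gt0.
move: P1 P2; rewrite /ratf /Nn /alL /beL /Pq => P1 P2.
rewrite -![_ *: _]/(_ * _).
by field; rewrite P1 P2.
Qed.

Lemma deriv_cont (f df : R -> R) : (forall x : R, is_derive x (1:R) f (df x)) -> continuous f.
Proof.
by move=> h x; apply/differentiable_continuous/derivable1_diffP; case: (h x).
Qed.

Lemma Pq_cont (s c : R) : continuous (Pq s c).
Proof. exact: (deriv_cont (fun x => is_derive_Pq s c x)). Qed.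

Lemma lin_cont (al be : R) : continuous (fun t : R => al * t + be).
Proof.
apply: (@deriv_cont _ (fun _ => al)) => x.
apply: is_derive_eq; rewrite -![_ *: _]/(_ * _); ring.
Qed.

Lemma ratf_cont (a e c y al be : R) : 0 < a -> 0 < e -> continuous (ratf a e c y al be).
Proof.
move=> a0 e0 x.
apply: (@continuousM _ _ (fun t => al * t + be) (fun t => (Pq a c t * Pq e y t)^-1)).
  exact: lin_cont.
apply: continuousV; first by rewrite mulf_neq0 // gt_eqF // Pq_gt0.
apply: (@continuousM _ _ (Pq a c) (Pq e y)); exact: Pq_cont.
Qed.

Lemma hM_cont (a c M : R) : 0 < a -> continuous (fun t => M / Pq a c t).
Proof.
move=> a0 x.
apply: (@continuousM _ _ (cst M) (fun t => (Pq a c t)^-1)).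
  exact: cst_continuous.
apply: continuousV; first by rewrite gt_eqF // Pq_gt0.
exact: Pq_cont.
Qed.

Lemma is_derive_H (a c M x : R) : 0 < a ->
  is_derive x (1:R) (fun t => M / a * atan ((t - c) / a)) (M / Pq a c x).
Proof.
move=> a0; have h := is_derive_atan c x a0.
apply: is_derive_eq; rewrite -![_ *: _]/(_ * _).
have P1 : Pq a c x != 0 by rewrite gt_eqF // Pq_gt0.
have an : a != 0 by rewrite gt_eqF.
by field; rewrite P1 an.
Qed.

Definition Mb (e y al be : R) := `|al| * ((`|y| + 1) * (1 + e^-2)) + `|be| / e^+2.

Lemma ratf_bound (a e c y al be t : R) : 0 < a -> 0 < e ->
  `|ratf a e c y al be t| <= Mb e y al be / Pq a c t.
Proof.
move=> a0 e0.
have P0 := Pq_gt0 c t a0.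
have Q0 := Pq_gt0 y t e0.
set P := Pq a c t in P0 *; set Q := Pq e y t in Q0 *.
have e2 : 0 < e^+2 by rewrite exprn_gt0.
have ee : e^-2 * e^+2 = 1 by rewrite mulVf // gt_eqF.
have ht : `|t| <= (`|y| + 1) * (1 + e^-2) * Q.
  have h1 : `|t| <= `|y| + `|t - y|.
    by rewrite (le_trans _ (ler_normD _ _)) // addrC subrK.
  set u := t - y in h1.
  have h2 : `|u| <= 1 + u^+2.
    rewrite -real_normK ?num_real //; have := normr_ge0 u; nra.
  have h3 : 1 + u^+2 <= (1 + e^-2) * Q.
    rewrite /Q /Pq -/u mulrDl mul1r mulrDr ee.
    have : 0 <= e^-2 * u^+2 by rewrite mulr_ge0 // ?sqr_ge0 // invr_ge0 ltW.
    have := sqr_ge0 u; lra.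
  have hy := normr_ge0 y.
  have hu2 := sqr_ge0 u.
  have : `|y| * u^+2 <= `|y| * u^+2 + `|y| * 0 by lra.
  have : (`|y| + 1) * (1 + u^+2) <= (`|y| + 1) * ((1 + e^-2) * Q).
    by rewrite ler_pM2l //; lra.
  nra.
have hQ : 1 <= Q / e^+2.
  by rewrite ler_pdivlMr // mul1r /Q /Pq lerDl sqr_ge0.
have hnum : `|al * t + be| <= Mb e y al be * Q.
  rewrite (le_trans (ler_normD _ _)) // normrM /Mb mulrDl.
  apply: lerD.
    by rewrite -mulrA; apply: ler_wpM2l; [exact: normr_ge0| exact: ht].
  have H := ler_wpM2l (normr_ge0 be) hQ; rewrite mulr1 in H.
  by rewrite (_ : `|be| / e^+2 * Q = `|be| * (Q / e^+2)) //; ring.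
have PQ0 : 0 < P * Q by rewrite mulr_gt0.
rewrite /ratf -/P -/Q normrM normfV (gtr0_norm PQ0) ler_pdivrMr //.
apply: le_trans hnum _.
have Pn : P != 0 by rewrite gt_eqF.
by rewrite (_ : Mb e y al be / P * (P * Q) = Mb e y al be * Q) //; field.
Qed.
End S1.


Section S2.
Context {R : realType}.

Lemma Pq_mirror (s c t : R) : Pq s c (- t) = Pq s (- c) t.
Proof. by rewrite /Pq; congr (_ + _); rewrite -sqrrN; congr (_ ^+ 2); ring. Qed.

Lemma lim_hM (s c M : R) : 0 < s -> (M / Pq s c t) @[t --> +oo] --> 0.
Proof.
move=> s0; apply/cvgrPdist_le => eps eps0.
exists (c + `|M| / eps + 1); split; first exact: num_real.
move=> t ht.
have P0 := Pq_gt0 c t s0.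
rewrite sub0r normrN normrM normfV (gtr0_norm P0) ler_pdivrMr //.
have hm : `|M| / eps * eps = `|M| by rewrite divfK // gt_eqF.
set m := `|M| / eps in ht hm.
have m0 : 0 <= m by rewrite divr_ge0 // ltW.
have h1 : eps * (t - c) <= eps * (t - c)^+2.
  rewrite ler_pM2l //; nra.
rewrite /Pq.
have := sqr_ge0 s; nra.
Qed.

Lemma lim_hMN (s c M : R) : 0 < s -> (M / Pq s c t) @[t --> -oo] --> 0.
Proof.
move=> s0; rewrite cvgNy_compNP.
have -> : (fun t => M / Pq s c t) \o -%R = (fun t => M / Pq s (- c) t).
  by apply/funext => t /=; rewrite Pq_mirror.
exact: lim_hM.
Qed.

Lemma lim_atan (s c : R) : 0 < s -> atan ((t - c) / s) @[t --> +oo] --> pi / 2.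
Proof.
move=> s0.
apply: (@cvg_comp _ _ _ (fun t => (t - c) / s) atan _ _ _ _ (@cvgy_atan R)).
apply/cvgryPge => A.
exists (A * s + c); split; first exact: num_real.
move=> t ht; rewrite ler_pdivlMr //; lra.
Qed.

Lemma lim_atanN (s c : R) : 0 < s -> atan ((t - c) / s) @[t --> -oo] --> - (pi / 2).
Proof.
move=> s0; rewrite cvgNy_compNP.
have -> : (fun t => atan ((t - c) / s)) \o -%R = (fun t => - atan ((t - - c) / s)).
  by apply/funext => t /=; rewrite -atanN; congr atan; rewrite -mulNr; congr (_ / _); ring.
apply: cvgN; exact: lim_atan.
Qed.

Lemma lim_PQ (a e c y : R) : 0 < a -> 0 < e ->
  (Pq a c t / Pq e y t) @[t --> +oo] --> (1:R).
Proof.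
move=> a0 e0; apply/cvgrPdist_le => eps eps0.
set d := y - c.
set A := `|e^+2 - a^+2|.
set D := `|d|.
set K := A + d^+2 + 2 * D.
exists (y + 1 + K / eps); split; first exact: num_real.
move=> t ht.
have P0 := Pq_gt0 c t a0.
have Q0 := Pq_gt0 y t e0.
have Qn : Pq e y t != 0 by rewrite gt_eqF.
rewrite (_ : 1 - Pq a c t / Pq e y t = (Pq e y t - Pq a c t) / Pq e y t); last by field.
rewrite normrM normfV (gtr0_norm Q0) ler_pdivrMr //.
rewrite /Pq.
set u := t - y.
have -> : t - c = u + d by rewrite /u /d; ring.
have hk : K / eps * eps = K by rewrite divfK // gt_eqF.
set k := K / eps in ht hk.
have K0 : 0 <= K.
  rewrite /K; have := normr_ge0 (e^+2 - a^+2); have := normr_ge0 d; have := sqr_ge0 d.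
  rewrite -/A -/D; lra.
have k0 : 0 <= k by rewrite /k divr_ge0 // ltW.
have u1 : 1 + k < u by rewrite /u; lra.
have Ku : K <= eps * u by nra.
have hA : - A <= e^+2 - a^+2 <= A by rewrite -ler_norml.
have hD : - D <= d <= D by rewrite -ler_norml.
case/andP: hA => hA1 hA2; case/andP: hD => hD1 hD2.
have A0 : 0 <= A by apply: normr_ge0.
have D0 : 0 <= D by apply: normr_ge0.
have f1 : u * d <= D * u by nra.
have f2 : - (D * u) <= u * d by nra.
have f3 : K * u <= eps * u ^+ 2 by nra.
have f4 : A <= A * u by nra.
have f5 : d^+2 <= d^+2 * u by have := sqr_ge0 d; nra.
have f6 : 0 <= eps * e^+2 by rewrite mulr_ge0 ?sqr_ge0 // ltW.
rewrite ler_norml; apply/andP; split; rewrite /K in f3; nra.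
Qed.

Lemma lim_lnPQ (a e c y : R) : 0 < a -> 0 < e ->
  (ln (Pq a c t) - ln (Pq e y t)) @[t --> +oo] --> (0:R).
Proof.
move=> a0 e0.
have -> : (fun t => ln (Pq a c t) - ln (Pq e y t)) = (@ln R) \o (fun t => Pq a c t / Pq e y t).
  apply/funext => t /=; rewrite ln_div // posrE Pq_gt0 //.
have e1 : ln (1:R) = 0 by exact: ln1.
have h : (@ln R) x @[x --> (1:R)] --> (0:R).
  rewrite -e1; exact: (continuous_ln (@ltr01 R)).
exact: cvg_comp (lim_PQ c y a0 e0) h.
Qed.

Lemma lim_lnPQN (a e c y : R) : 0 < a -> 0 < e ->
  (ln (Pq a c t) - ln (Pq e y t)) @[t --> -oo] --> (0:R).
Proof.
move=> a0 e0; rewrite cvgNy_compNP.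
have -> : (fun t => ln (Pq a c t) - ln (Pq e y t)) \o -%R =
  (fun t => ln (Pq a (- c) t) - ln (Pq e (- y) t)).
  by apply/funext => t /=; rewrite !Pq_mirror.
exact: lim_lnPQ.
Qed.

Lemma lim_G (a e c y : R) : 0 < a -> 0 < e -> Gf a e c y t @[t --> +oo] --> (0:R).
Proof.
move=> a0 e0; rewrite /Gf.
have -> : (0:R) = (e-a)/2 * 0 - (y - c) * (pi/2) + (y-c) * (pi/2) by ring.
apply: cvgD; first apply: cvgB.
- apply: cvgM; [exact: cvg_cst | exact: lim_lnPQ].
- apply: cvgM; [exact: cvg_cst | exact: lim_atan].
- apply: cvgM; [exact: cvg_cst | exact: lim_atan].
Qed.

Lemma lim_GN (a e c y : R) : 0 < a -> 0 < e -> Gf a e c y t @[t --> -oo] --> (0:R).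
Proof.
move=> a0 e0; rewrite /Gf.
have -> : (0:R) = (e-a)/2 * 0 - (y - c) * (- (pi/2)) + (y-c) * (- (pi/2)) by ring.
apply: cvgD; first apply: cvgB.
- apply: cvgM; [exact: cvg_cst | exact: lim_lnPQN].
- apply: cvgM; [exact: cvg_cst | exact: lim_atanN].
- apply: cvgM; [exact: cvg_cst | exact: lim_atanN].
Qed.

Lemma lim_H (a c M : R) : 0 < a ->
  (M / a * atan ((t - c) / a)) @[t --> +oo] --> (M / a * (pi / 2)).
Proof. by move=> a0; apply: cvgM; [exact: cvg_cst | exact: lim_atan]. Qed.

Lemma lim_HN (a c M : R) : 0 < a ->
  (M / a * atan ((t - c) / a)) @[t --> -oo] --> (M / a * (- (pi / 2))).
Proof. by move=> a0; apply: cvgM; [exact: cvg_cst | exact: lim_atanN]. Qed.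
End S2.



Section S3.
Context {R : realType}.
Notation mu := (@lebesgue_measure R).

Lemma Mb_ge0 (e y al be : R) : 0 < e -> 0 <= Mb e y al be.
Proof.
move=> e0; rewrite /Mb addr_ge0 // ?mulr_ge0 // ?divr_ge0 // ?addr_ge0 // ?invr_ge0 ?sqr_ge0 //.
Qed.

Lemma hM_int (a c M : R) : 0 < a -> 0 <= M ->
  mu.-integrable setT (EFin \o (fun t => M / Pq a c t)).
Proof.
move=> a0 M0.
have [h _] := @FTC_R_int R (fun t => M / Pq a c t) (fun t => M / a * atan ((t - c) / a)) _ _
  (fun x => divr_ge0 M0 (ltW (Pq_gt0 c x a0))) (@hM_cont R a c M a0)
  (fun x => @is_derive_H R a c M x a0) (@lim_H R a c M a0) (@lim_HN R a c M a0).
exact: h.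
Qed.

Lemma ratf_int (a e c y al be : R) : 0 < a -> 0 < e ->
  mu.-integrable setT (EFin \o ratf a e c y al be).
Proof.
move=> a0 e0.
apply: (@le_integrable _ _ _ mu setT measurableT _ (EFin \o (fun t => Mb e y al be / Pq a c t))); last first.
  exact: (@hM_int a c (Mb e y al be) a0 (@Mb_ge0 e y al be e0)).
  move=> t _ /=; rewrite lee_fin (ger0_norm (divr_ge0 (@Mb_ge0 e y al be e0) (ltW (@Pq_gt0 R a c t a0)))).
  exact: ratf_bound.
by apply/measurable_EFinP; apply: continuous_measurable_fun; exact: ratf_cont.
Qed.

Lemma is_derive_Fd (a c x : R) : 0 < a ->
  is_derive x (1:R) (fun t => - (a / Pq a c t)) (ratf a a c c (alL a a) (beL a a c c) x).
Proof.
move=> a0.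
have Pn : Pq a c x != 0 by rewrite gt_eqF // Pq_gt0.
have hv := @is_deriveV R (Pq a c) x _ 1 Pn (is_derive_Pq a c x).
apply: is_derive_eq.
rewrite -![_ *: _]/(_ * _).
move: Pn; rewrite /ratf /alL /beL /Pq => Pn.
by field.
Qed.

Lemma key_int (a e c y : R) : 0 < a -> 0 < e ->
  Rintegral mu setT (ratf a e c y (alL a e) (beL a e c y)) = 0.
Proof.
move=> a0 e0.
have [Nz|Nn0] := eqVneq (Nn a e c y) 0.
  have : ((y - c)^+2 == 0) && ((a - e)^+2 == 0).
    by rewrite -paddr_eq0 ?sqr_ge0 // -/(Nn a e c y) Nz.
  rewrite !sqrf_eq0 !subr_eq0 => /andP[/eqP yc /eqP ae].
  rewrite yc -ae.
  set M := Mb a c (alL a a) (beL a a c c).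
  have L1 : (- (a / Pq a c t)) @[t --> +oo] --> (0:R).
    by rewrite -oppr0; apply: cvgN; exact: lim_hM.
  have L2 : (- (a / Pq a c t)) @[t --> -oo] --> (0:R).
    by rewrite -oppr0; apply: cvgN; exact: lim_hMN.
  have [_ ->] := @FTC_R_signed R (ratf a a c c (alL a a) (beL a a c c))
    (fun t => - (a / Pq a c t)) (fun t => M / Pq a c t)
    (fun t => M / a * atan ((t - c) / a)) 0 0 (M / a * (pi / 2)) (M / a * (- (pi / 2)))
    (fun x => @ratf_bound R a a c c (alL a a) (beL a a c c) x a0 a0) (@ratf_cont R a a c c (alL a a) (beL a a c c) a0 a0) (@hM_cont R a c M a0)
    (fun x => @is_derive_Fd a c x a0) (fun x => @is_derive_H R a c M x a0) L1 L2
    (@lim_H R a c M a0) (@lim_HN R a c M a0).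
  by rewrite subrr.
set N := Nn a e c y.
set M := Mb e y (N * alL a e) (N * beL a e c y).
have [_ I0] := @FTC_R_signed R (ratf a e c y (N * alL a e) (N * beL a e c y))
    (Gf a e c y) (fun t => M / Pq a c t)
    (fun t => M / a * atan ((t - c) / a)) 0 0 (M / a * (pi / 2)) (M / a * (- (pi / 2)))
    (fun x => @ratf_bound R a e c y (N * alL a e) (N * beL a e c y) x a0 e0) (@ratf_cont R a e c y (N * alL a e) (N * beL a e c y) a0 e0) (@hM_cont R a c M a0)
    (fun x => @is_derive_G R a e c y x a0 e0) (fun x => @is_derive_H R a c M x a0)
    (@lim_G R a e c y a0 e0) (@lim_GN R a e c y a0 e0)
    (@lim_H R a c M a0) (@lim_HN R a c M a0).
have E : Rintegral mu setT (ratf a e c y (N * alL a e) (N * beL a e c y)) =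
    N * Rintegral mu setT (ratf a e c y (alL a e) (beL a e c y)).
  rewrite -RintegralZl //; last exact: ratf_int.
  by apply: eq_Rintegral => t _; rewrite /ratf; ring.
move: I0; rewrite E subrr => /eqP; rewrite mulf_eq0 (negbTE Nn0) /=.
by move/eqP.
Qed.

Lemma pos_int (a e c y : R) : 0 < a -> 0 < e ->
  0 < Rintegral mu setT (ratf a e c y 0 1).
Proof.
move=> a0 e0.
set f := ratf a e c y 0 1.
set m := ((a^+2 + 1) * (e^+2 + (`|y - c| + 1)^+2))^-1.
have m0 : 0 < m by rewrite invr_gt0 mulr_gt0 // ltr_pwDr ?sqr_ge0 ?exprn_gt0 //; 
  rewrite ?ltr01 // ltr_wpDr ?sqr_ge0 // ?exprn_gt0 // ltr_pwDr ?normr_ge0.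
have fi : mu.-integrable setT (EFin \o f) by exact: ratf_int.
have cf : continuous f by exact: ratf_cont.
have f0 t : 0 <= f t.
  by rewrite /f /ratf mul0r add0r div1r invr_ge0 ltW // mulr_gt0 // Pq_gt0.
have lb t : c <= t <= c + 1 -> m <= f t.
  move=> /andP[t1 t2].
  rewrite /f /ratf mul0r add0r div1r /m lef_pV2 ?posrE ?mulr_gt0 ?Pq_gt0 //; last first.
    by rewrite ltr_pwDr ?sqr_ge0 ?exprn_gt0 // ltr_wpDr ?sqr_ge0 ?exprn_gt0 // ltr_pwDr ?normr_ge0.
    by rewrite ltr_pwDr ?ltr01 ?sqr_ge0.
have hP : Pq a c t <= a^+2 + 1 by rewrite /Pq lerD2l; nra.
  have hQ : Pq e y t <= e^+2 + (`|y - c| + 1)^+2.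
    rewrite /Pq lerD2l.
    have h1 : `|t - y| <= `|y - c| + 1.
      rewrite (_ : t - y = (t - c) - (y - c)); last by ring.
      rewrite (le_trans (ler_normB _ _)) // addrC lerD2l ger0_norm; lra.
    rewrite -[(t - y)^+2]real_normK ?num_real //.
    have := normr_ge0 (t - y); nra.
  by apply: ler_pM => //; apply: ltW; apply: Pq_gt0.
have mf : measurable_fun setT f by exact: continuous_measurable_fun.
have H : (m%:E <= \int[mu]_(x in setT) (f x)%:E)%E.
  apply: (@le_trans _ _ (\int[mu]_(x in `[c, (c + 1)%R]) (f x)%:E)%E); last first.
    apply: ge0_subset_integral => //.
    - by apply/measurable_EFinP.
    - by move=> x _; rewrite lee_fin.
  apply: (@le_trans _ _ (\int[mu]_(x in `[c, (c + 1)%R]) (cst m%:E x))%E).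
    rewrite integral_cst //.
    have L : (lebesgue_measure (`[c, (c + 1)%R] : set R) = 1%E).
      rewrite lebesgue_measure_itv /= lte_fin ltrDl ltr01 -EFinD; congr EFin; ring.
    set Y := (X in (_ * X)%E).
    suff -> : Y = 1%E by rewrite mule1.
    exact: L.
  apply: ge0_le_integral => //.
  - by move=> x _; rewrite lee_fin ltW.
  - by apply/measurable_EFinP; apply: measurable_funTS.
rewrite /Rintegral.
have fin := integrable_fin_num measurableT fi.
move: H; rewrite -(fineK fin) lee_fin => H.
exact: lt_le_trans m0 H.
Qed.
End S3.

Unset Implicit Arguments.
Theorem mainTheorem3 (R : realType) (s0 se th0 b : R) :
  0 < s0 -> 0 < se ->
  forall x : R,
    let w := post_weight (cauchy_pdf th0 s0) (cauchy_pdf 0 se) x b in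
    (@lebesgue_measure R).-integrable setT (fun th => (w th)%:E) /\
    (@lebesgue_measure R).-integrable setT (fun th => (th * w th)%:E) /\
    0 < Rintegral (@lebesgue_measure R) setT w /\
    posterior_mean (cauchy_pdf th0 s0) (cauchy_pdf 0 se) x b - th0
      = s0 / (s0 + se) * (x - b - th0).
Proof.
move=> a0 e0 x w.
set y := x - b.
set k := s0 * se / pi ^+ 2.
have pin : (pi : R) != 0 by rewrite gt_eqF // pi_gt0.
have an : s0 != 0 by rewrite gt_eqF.
have en : se != 0 by rewrite gt_eqF.
have wE th : w th = k * ratf s0 se th0 y 0 1 th.
  have P1 : Pq s0 th0 th != 0 by rewrite gt_eqF // Pq_gt0.
  have P2 : Pq se y th != 0 by rewrite gt_eqF // Pq_gt0.
  move: P1 P2; rewrite /w /post_weight /cauchy_pdf /ratf /Pq /k /y => P1 P2.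
  move: (pi : R) pin => p pn.
  by field; rewrite P1 P2 an en pn.
have twE th : th * w th = k * ratf s0 se th0 y 1 0 th.
  by rewrite wE /ratf; ring.
have ae0 : 0 < s0 + se by rewrite addr_gt0.
have aen : s0 + se != 0 by rewrite gt_eqF.
set K0 := th0 + s0 * (y - th0) / (s0 + se).
have dec th : ratf s0 se th0 y 1 0 th =
    K0 * ratf s0 se th0 y 0 1 th + (s0 + se)^-1 * ratf s0 se th0 y (alL s0 se) (beL s0 se th0 y) th.
  have P1 : Pq s0 th0 th != 0 by rewrite gt_eqF // Pq_gt0.
  have P2 : Pq se y th != 0 by rewrite gt_eqF // Pq_gt0.
  move: P1 P2; rewrite /ratf /alL /beL /K0 => P1 P2.
  by field; rewrite ?P1 ?P2 ?aen.
have i01 := @ratf_int R s0 se th0 y 0 1 a0 e0.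
have i10 := @ratf_int R s0 se th0 y 1 0 a0 e0.
have iL := @ratf_int R s0 se th0 y (alL s0 se) (beL s0 se th0 y) a0 e0.
pose Z := Rintegral (@lebesgue_measure R) setT (ratf s0 se th0 y 0 1).
have Zpos : 0 < Z := @pos_int R s0 se th0 y a0 e0.
have IW : Rintegral (@lebesgue_measure R) setT w = k * Z.
  rewrite -RintegralZl //; apply: eq_Rintegral => t _; exact: wE.
have ITW : Rintegral (@lebesgue_measure R) setT (fun th => th * w th) = k * (K0 * Z).
  have -> : Rintegral (@lebesgue_measure R) setT (fun th => th * w th) =
      Rintegral (@lebesgue_measure R) setT (fun th => k * ratf s0 se th0 y 1 0 th).
    by apply: eq_Rintegral => t _; exact: twE.
  rewrite RintegralZl //; congr (_ * _).
  have -> : Rintegral (@lebesgue_measure R) setT (ratf s0 se th0 y 1 0) =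
      Rintegral (@lebesgue_measure R) setT (fun th => K0 * ratf s0 se th0 y 0 1 th + (s0 + se)^-1 * ratf s0 se th0 y (alL s0 se) (beL s0 se th0 y) th).
    by apply: eq_Rintegral => t _; exact: dec.
  rewrite RintegralD //; last 2 first.
  - exact: (integrableZl measurableT K0 i01).
  - exact: (integrableZl measurableT _ iL).
  by rewrite !RintegralZl // key_int // mulr0 addr0.
have kpos : 0 < k by rewrite /k divr_gt0 ?mulr_gt0 ?exprn_gt0 ?pi_gt0.
split.
  apply: eq_integrable (integrableZl measurableT k i01) => // t _.
  by rewrite /= wE.
split.
  apply: eq_integrable (integrableZl measurableT k i10) => // t _.
  by rewrite /= twE.
split; first by rewrite IW mulr_gt0.
rewrite /posterior_mean -/w ITW IW /K0 /y.
have Zn : Z != 0 by rewrite gt_eqF.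
have kn : k != 0 by rewrite gt_eqF.
by field; rewrite ?Zn ?kn ?aen.
Qed.
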